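(* Let $\mathcal S$ be a finite fundamental system and $G$ the elementary group generated by the elements of $\mathcal S$. Then $G$ is solvable, and its derived length is at most the cardinality of $\mathcal S$.
   Context: A homeomorphism $f$ of $[0,1]$ is simple if $[0,1]\setminus\mathrm{Fix}(f)$ has exactly one connected component; its closure is the support $S_f$ of $f$. It is positive if $f(x)\ge x$ for all $x$. A fundamental domain of a simple $f$ is a segment $[x,f(x)]$ with $x$ in the interior of $S_f$. A fundamental system is a family $\mathcal S$ of triples $(f,S_f,I_f)$ such that each $f$ is a simple positive homeomorphism of $[0,1]$, $S_f$ is its support and $I_f\subset S_f$ is a fundamental domain of $f$, and for any two distinct triples in $\mathcal S$: either $S_f$ and $S_g$ have disjoint interiors, or $S_f\subset I_g$, or $S_g\subset I_f$. An elementary group is a group generated by the elements $f$ of a fundamental system. The derived length of a solvable group $G$ is the least $k$ with $G_k=\{1\}$, where $G_1=[G,G]$ and $G_{j+1}=[G_j,G_j]$. *)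

(* Defs.v *)
From Stdlib Require Import Reals List.
Open Scope R_scope.

(* Homeomorphisms of [0,1] are represented as maps R -> R that are the
   identity outside [0,1] (canonical extension). *)
Definition I01 (x : R) : Prop := 0 <= x <= 1.

Definition cont01 (f : R -> R) : Prop :=
  forall x, I01 x -> limit1_in f I01 (f x) x.

Definition homeo01 (f : R -> R) : Prop :=
  (forall x, ~ I01 x -> f x = x) /\ (forall x, I01 x -> I01 (f x)) /\ cont01 f /\
  exists g : R -> R,
    (forall x, ~ I01 x -> g x = x) /\ (forall x, I01 x -> I01 (g x)) /\ cont01 g /\
    (forall x, I01 x -> g (f x) = x /\ f (g x) = x).

Definition moved (f : R -> R) (x : R) : Prop := I01 x /\ f x <> x.

(* exactly one connected component: nonempty and connected (an interval) *)
Definition simple (f : R -> R) : Prop :=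
  (exists x, moved f x) /\
  (forall a b c, moved f a -> moved f b -> a <= c <= b -> moved f c).

Definition closure (A : R -> Prop) (x : R) : Prop :=
  forall eps, 0 < eps -> exists y, A y /\ Rabs (y - x) < eps.

Definition interior (A : R -> Prop) (x : R) : Prop :=
  exists eps, 0 < eps /\ forall y, Rabs (y - x) < eps -> A y.

Definition support (f : R -> R) : R -> Prop := closure (moved f).

Definition positive (f : R -> R) : Prop := forall x, x <= f x.

Definition segment (a b : R) (y : R) : Prop := a <= y <= b.

Definition fundamental_domain (f : R -> R) (I : R -> Prop) : Prop :=
  exists x, interior (support f) x /\ forall y, I y <-> segment x (f x) y.

(* A finite fundamental system: a duplicate-free list of pairs (f, I_f);
   the support S_f is determined by f (S_f = support f). *)
Definition fundamental_system (S : list ((R -> R) * (R -> Prop))) : Prop :=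
  NoDup S /\
  (forall p, In p S ->
     homeo01 (fst p) /\ simple (fst p) /\ positive (fst p) /\
     fundamental_domain (fst p) (snd p)) /\
  (forall p q, In p S -> In q S -> p <> q ->
     (forall x, ~ (interior (support (fst p)) x /\ interior (support (fst q)) x))
     \/ (forall x, support (fst p) x -> snd q x)
     \/ (forall x, support (fst q) x -> snd p x)).

Inductive gen (A : (R -> R) -> Prop) : (R -> R) -> Prop :=
| gen_id : gen A (fun x => x)
| gen_base : forall f, A f -> gen A f
| gen_comp : forall f g, gen A f -> gen A g -> gen A (fun x => f (g x))
| gen_inv : forall f g, gen A f -> (forall x, f (g x) = x /\ g (f x) = x) -> gen A g.

Definition inverse_of (f g : R -> R) : Prop := forall x, f (g x) = x /\ g (f x) = x.

Definition comm_set (H : (R -> R) -> Prop) (h : R -> R) : Prop :=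
  exists f g fi gi, H f /\ H g /\ inverse_of f fi /\ inverse_of g gi /\
    h = (fun x => fi (gi (f (g x)))).

Fixpoint derived (G : (R -> R) -> Prop) (k : nat) : (R -> R) -> Prop :=
  match k with
  | O => G
  | S k' => gen (comm_set (derived G k'))
  end.

Definition elementary_group (S : list ((R -> R) * (R -> Prop))) : (R -> R) -> Prop :=
  gen (fun f => exists I, In (f, I) S).

Definition trivial_group (H : (R -> R) -> Prop) : Prop :=
  forall h, H h -> h = (fun x => x).

Definition solvable (G : (R -> R) -> Prop) : Prop :=
  exists k, trivial_group (derived G k).

Definition derived_length_le (G : (R -> R) -> Prop) (n : nat) : Prop :=
  trivial_group (derived G n).

(* Main.v *)
Require Import Defs.
From Stdlib Require Import Reals List.
From Stdlib Require Import Lra Lia Classical ClassicalEpsilon FunctionalExtensionality ZArith.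
Open Scope R_scope.

Definition mv (f : R -> R) (x : R) : Prop := f x <> x.
Definition incr (f : R -> R) : Prop := forall x y, x < y -> f x < f y.

Definition clamp (x : R) : R := Rmax 0 (Rmin 1 x).

Lemma clamp_I01 x : I01 (clamp x).
Proof. unfold clamp, I01, Rmax, Rmin; repeat destruct Rle_dec; lra. Qed.

Lemma clamp_id x : I01 x -> clamp x = x.
Proof. unfold clamp, I01, Rmax, Rmin; intros; repeat destruct Rle_dec; lra. Qed.

Lemma clamp_lip x y : Rabs (clamp y - clamp x) <= Rabs (y - x).
Proof.
  unfold clamp, Rmax, Rmin; repeat destruct Rle_dec;
  unfold Rabs; repeat destruct Rcase_abs; lra.
Qed.

Lemma cont_clamp f : cont01 f -> continuity (fun x => f (clamp x)).
Proof.
  intros Hc x. unfold continuity_pt, continue_in, limit1_in, limit_in. simpl. unfold R_dist.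
  intros eps Heps.
  destruct (Hc (clamp x) (clamp_I01 x) eps Heps) as [alp [Halp H]].
  exists alp; split; auto.
  intros y [_ Hy]. apply H. split. apply clamp_I01. simpl; unfold R_dist.
  pose proof (clamp_lip x y). lra.
Qed.

Lemma homeo_incr f : homeo01 f -> Defs.positive f -> incr f.
Proof.
  intros [Hout [Hin [Hc [g [Hgout [Hgin [_ Hinv]]]]]]] Hpos.
  assert (Hinj : forall a b, f a = f b -> a = b).
  { intros a b E.
    assert (Ha : g (f a) = a).
    { destruct (classic (I01 a)) as [H|H]. apply (Hinv a H). rewrite (Hout a H). apply Hgout; auto. }
    assert (Hb : g (f b) = b).
    { destruct (classic (I01 b)) as [H|H]. apply (Hinv b H). rewrite (Hout b H). apply Hgout; auto. }
    rewrite <- Ha, <- Hb, E; auto. }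
  assert (H1 : f 1 = 1).
  { assert (I01 1) by (unfold I01; lra). pose proof (Hin 1 H). pose proof (Hpos 1). unfold I01 in *. lra. }
  assert (Hloc : forall a b, I01 a -> I01 b -> a < b -> f a < f b).
  { intros a b Ha Hb Hab.
    destruct (Rlt_or_le (f a) (f b)) as [|Hle]; auto. exfalso.
    assert (Hne : f a <> f b) by (intro E; apply Hinj in E; lra).
    pose proof (Hin a Ha); pose proof (Hin b Hb). unfold I01 in *.
    assert (Hb1 : b < 1).
    { destruct (Req_dec b 1); [subst; lra|lra]. }
    assert (Hfa1 : f a < 1).
    { destruct (Req_dec (f a) 1) as [E|]; [|lra]. rewrite <- H1 in E. apply Hinj in E. lra. }
    destruct (IVT (fun x => f (clamp x) - f a) b 1) as [z [Hz Ez]].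
    - apply continuity_minus. apply cont_clamp; auto. apply continuity_const. intros u v; auto.
    - lra.
    - rewrite clamp_id by (unfold I01; lra). lra.
    - rewrite clamp_id by (unfold I01; lra). lra.
    - rewrite clamp_id in Ez by (unfold I01; lra).
      assert (z = a) by (apply Hinj; lra). lra. }
  intros a b Hab.
  destruct (classic (I01 a)) as [Ha|Ha]; destruct (classic (I01 b)) as [Hb|Hb].
  - auto.
  - rewrite (Hout b Hb). pose proof (Hin a Ha). unfold I01 in *. lra.
  - rewrite (Hout a Ha). pose proof (Hin b Hb). unfold I01 in *. lra.
  - rewrite (Hout a Ha), (Hout b Hb). auto.
Qed.

Definition pr := ((R -> R) * (R -> Prop))%type.

Definition convex (f : R -> R) := forall a b c, mv f a -> mv f b -> a <= c <= b -> mv f c.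

Definition nice (p : pr) : Prop :=
  incr (fst p) /\ (exists fi, inverse_of (fst p) fi) /\ (forall x, x <= fst p x) /\
  convex (fst p) /\ exists x0, mv (fst p) x0 /\ forall y, snd p y <-> x0 <= y <= fst p x0.

Definition disj (f g : R -> R) := forall x, ~ (mv f x /\ mv g x).
Definition below (p q : pr) := forall x, mv (fst p) x -> snd q x.

Lemma incr_le f x y : incr f -> x <= y -> f x <= f y.
Proof. intros H [Hl|He]. left; auto. subst; lra. Qed.

Lemma incr_le_iff f x y : incr f -> (f x <= f y <-> x <= y).
Proof.
  intros H; split; intros Hl.
  - destruct (Rle_or_lt x y); auto. apply H in H0. lra.
  - apply incr_le; auto.
Qed.

Lemma mv_f f fi x : inverse_of f fi -> mv f x -> mv f (f x).
Proof. intros Hi Hm E. apply Hm. destruct (Hi (f x)) as [_ A]. destruct (Hi x) as [_ B]. rewrite E in A. congruence. Qed.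

Lemma mv_fi f fi x : inverse_of f fi -> mv f x -> mv f (fi x).
Proof. intros Hi Hm E. apply Hm. destruct (Hi x) as [H1 _]. rewrite E in H1. congruence. Qed.

Lemma nice_inner p y : nice p -> mv (fst p) y ->
  exists fi, inverse_of (fst p) fi /\ fi y < y /\ y < fst p y /\ mv (fst p) (fi y) /\ mv (fst p) (fst p y).
Proof.
  intros [Hinc [[fi Hi] [Hpos [Hcv _]]]] Hm. exists fi. split; auto.
  pose proof (Hpos y). pose proof (Hpos (fi y)). destruct (Hi y) as [H1 _].
  pose proof (mv_fi _ _ _ Hi Hm) as Hm2. pose proof (mv_f _ _ _ Hi Hm) as Hm3.
  rewrite H1 in H0. unfold mv in *.
  repeat split; auto.
  - destruct H0; auto. exfalso; apply Hm2. rewrite H1. auto.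
  - destruct H; auto. congruence.
Qed.

Lemma I_mv p y : nice p -> snd p y -> mv (fst p) y.
Proof.
  intros Hn Hy. pose proof Hn as [_ [[fi Hi] [_ [Hcv [x0 [Hx0 HI]]]]]].
  apply HI in Hy. apply (Hcv x0 (fst p x0)); auto. apply (mv_f _ fi); auto.
Qed.

Lemma below_irrefl p : nice p -> ~ below p p.
Proof.
  intros Hn Hb. pose proof Hn as [_ [_ [_ [_ [x0 [Hx0 HI]]]]]].
  destruct (nice_inner p x0 Hn Hx0) as [fi [Hi [H1 [H2 [H3 H4]]]]].
  apply Hb in H3. apply HI in H3. lra.
Qed.

Lemma below_trans p q r : nice q -> below p q -> below q r -> below p r.
Proof. intros Hn H1 H2 x Hx. apply H2. apply I_mv; auto. Qed.

Lemma below_inner q p x0 y : nice q -> (forall y, snd p y <-> x0 <= y <= fst p x0) ->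
  below q p -> mv (fst q) y -> x0 < y < fst p x0.
Proof.
  intros Hn HI Hb Hy.
  destruct (nice_inner q y Hn Hy) as [fi [Hi [H1 [H2 [H3 H4]]]]].
  apply Hb in Hy; apply Hb in H3; apply Hb in H4. apply HI in Hy; apply HI in H3; apply HI in H4. lra.
Qed.

Lemma nice_disj_below p q : nice p -> nice q -> disj (fst p) (fst q) -> below p q -> False.
Proof.
  intros Hp Hq Hd Hb. pose proof Hp as [_ [_ [_ [_ [x0 [Hx0 _]]]]]].
  apply (Hd x0). split; auto. apply I_mv; auto.
Qed.

Lemma commute f g fi gi : inverse_of f fi -> inverse_of g gi -> disj f g -> forall x, f (g x) = g (f x).
Proof.
  intros Hf Hg Hd x.
  destruct (classic (mv f x)) as [Hx|Hx].
  - pose proof (mv_f _ _ _ Hf Hx).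
    assert (g x = x) by (apply NNPP; intro; apply (Hd x); auto).
    assert (g (f x) = f x) by (apply NNPP; intro; apply (Hd (f x)); auto). congruence.
  - unfold mv in Hx. apply NNPP in Hx.
    destruct (classic (mv g x)) as [Hy|Hy].
    + pose proof (mv_f _ _ _ Hg Hy).
      assert (f (g x) = g x) by (apply NNPP; intro; apply (Hd (g x)); auto). congruence.
    + unfold mv in Hy. apply NNPP in Hy. congruence.
Qed.

Lemma nice_of f I : homeo01 f -> simple f -> Defs.positive f -> fundamental_domain f I -> nice (f, I).
Proof.
  intros Hh Hs Hp [x0 [Hx0 HI]]. simpl.
  pose proof (homeo_incr f Hh Hp) as Hinc.
  destruct Hh as [Hout [Hin [Hc [g [Hgout [Hgin [_ Hinv]]]]]]].
  assert (Hmv : forall x, mv f x <-> moved f x).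
  { intro x; unfold mv, moved; split.
    - intros H; split; auto. apply NNPP; intro HH. apply H, Hout, HH.
    - intros [_ H]; auto. }
  assert (Hcv : convex f).
  { intros a b c Ha Hb Hc'. apply Hmv. apply Hmv in Ha; apply Hmv in Hb. destruct Hs as [_ Hs]. exact (Hs a b c Ha Hb Hc'). }
  split; [auto|split;[|split;[|split;[auto|]]]].
  - exists g. simpl. intro x. destruct (classic (I01 x)) as [H|H].
    + destruct (Hinv x H); split; auto.
    + rewrite (Hgout x H), (Hout x H), (Hgout x H). auto.
  - exact Hp.
  - exists x0. split; [|exact HI].
    destruct Hx0 as [eps [Heps Hb]].
    assert (Hl : support f (x0 - eps/2)) by (apply Hb; rewrite Rabs_left; lra).
    assert (Hr : support f (x0 + eps/2)) by (apply Hb; rewrite Rabs_right; lra).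
    destruct (Hl (eps/2)) as [y1 [Hy1 Ey1]]; [lra|].
    destruct (Hr (eps/2)) as [y2 [Hy2 Ey2]]; [lra|].
    apply Rabs_def2 in Ey1; apply Rabs_def2 in Ey2.
    apply (Hcv y1 y2); try apply Hmv; auto; lra.
Qed.

Lemma mv_interior p x : nice p -> (forall y, mv (fst p) y -> moved (fst p) y) ->
  mv (fst p) x -> Defs.interior (support (fst p)) x.
Proof.
  intros Hn Hmm Hx.
  destruct (nice_inner p x Hn Hx) as [fi [Hi [H1 [H2 [H3 H4]]]]].
  pose proof Hn as [_ [_ [_ [Hcv _]]]].
  exists (Rmin (x - fi x) (fst p x - x)). split.
  { apply Rmin_glb_lt; lra. }
  intros y Hy. intros eps Heps. exists y. split.
  - pose proof (Rmin_l (x - fi x) (fst p x - x)); pose proof (Rmin_r (x - fi x) (fst p x - x)).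
    apply Rabs_def2 in Hy.
    assert (Hmy : mv (fst p) y) by (apply (Hcv (fi x) (fst p x)); auto; lra).
    apply Hmm; auto.
  - rewrite Rminus_diag, Rabs_R0; auto.
Qed.

Lemma gen_ext A f g : gen A f -> (forall x, f x = g x) -> gen A g.
Proof. intros H E. replace g with f; auto. apply functional_extensionality; auto. Qed.

Lemma gen_sub (A B : (R->R) -> Prop) f : (forall h, A h -> gen B h) -> gen A f -> gen B f.
Proof. intros H Hg. induction Hg. constructor. auto. apply gen_comp; auto. eapply gen_inv; eauto. Qed.

Lemma gen_has_inv A f : (forall h, A h -> exists hi, inverse_of h hi) -> gen A f ->
  exists fi, inverse_of f fi.
Proof.
  intros H Hg. induction Hg.
  - exists (fun x => x). intro; auto.
  - auto.
  - destruct IHHg1 as [fi Hf]; destruct IHHg2 as [gi Hgi].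
    exists (fun x => gi (fi x)). intro x. destruct (Hf x), (Hgi x), (Hf (g x)), (Hgi (fi x)). split; congruence.
  - exists f. intro x. destruct (H0 x); auto.
Qed.

Lemma inv_unique f g h : inverse_of f g -> inverse_of f h -> g = h.
Proof.
  intros H1 H2. apply functional_extensionality. intro x.
  destruct (H2 x) as [A _]. destruct (H1 (h x)) as [_ B]. rewrite A in B. auto.
Qed.

Lemma derived_mono (H K : (R->R) -> Prop) k : (forall f, H f -> K f) -> forall f, derived H k f -> derived K k f.
Proof.
  intros Hs. induction k; simpl; auto.
  intros f Hf. apply (gen_sub (comm_set (derived H k)) _ f); auto.
  intros h [a [b [ai [bi [Ha [Hb [Hai [Hbi E]]]]]]]]. apply gen_base.
  exists a, b, ai, bi. auto 10.
Qed.

Lemma derived_shift G k : derived G (S k) = derived (derived G 1) k.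
Proof. induction k. reflexivity. change (gen (comm_set (derived G (S k))) = gen (comm_set (derived (derived G 1) k))). rewrite IHk; auto. Qed.

Fixpoint it (f : R -> R) (n : nat) : R -> R :=
  match n with O => fun x => x | S n => fun x => f (it f n x) end.

Definition pw (r ri : R -> R) (k : Z) : R -> R :=
  if Z.leb 0 k then it r (Z.to_nat k) else it ri (Z.to_nat (- k)).

Section PW.
Variables r ri : R -> R.
Hypothesis Hi : inverse_of r ri.

Lemma pw_succ k x : pw r ri (Z.succ k) x = r (pw r ri k x).
Proof.
  unfold pw. destruct (Z.leb_spec 0 k).
  - rewrite (proj2 (Z.leb_le 0 (Z.succ k))) by lia.
    rewrite Z2Nat.inj_succ by lia. reflexivity.
  - destruct (Z.eq_dec k (-1)).
    + subst. simpl. destruct (Hi x); auto.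
    + rewrite (proj2 (Z.leb_gt 0 (Z.succ k))) by lia.
      replace (Z.to_nat (-k)) with (S (Z.to_nat (- Z.succ k))) by lia.
      simpl. destruct (Hi (it ri (Z.to_nat (- Z.succ k)) x)); auto.
Qed.

Lemma pw_pred k x : pw r ri (Z.pred k) x = ri (pw r ri k x).
Proof.
  replace k with (Z.succ (Z.pred k)) at 2 by lia. rewrite pw_succ. destruct (Hi (pw r ri (Z.pred k) x)); auto.
Qed.

Lemma pw_add a b x : pw r ri (a + b) x = pw r ri a (pw r ri b x).
Proof.
  revert x. induction a using Z.peano_ind; intro x.
  - reflexivity.
  - replace (Z.succ a + b)%Z with (Z.succ (a + b)) by lia. rewrite !pw_succ, IHa; auto.
  - replace (Z.pred a + b)%Z with (Z.pred (a + b)) by lia. rewrite !pw_pred, IHa; auto.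
Qed.

Lemma pw_inv k : inverse_of (pw r ri k) (pw r ri (- k)).
Proof.
  intro x. rewrite <- !pw_add. replace (k + - k)%Z with 0%Z by lia. replace (- k + k)%Z with 0%Z by lia.
  split; reflexivity.
Qed.

Lemma pw_1 x : pw r ri 1 x = r x.
Proof. reflexivity. Qed.
Lemma pw_m1 x : pw r ri (-1) x = ri x.
Proof. reflexivity. Qed.

Lemma it_prop (P : (R -> R) -> Prop) f n : P (fun x => x) -> (forall g, P g -> P (fun x => f (g x))) -> P (it f n).
Proof. intros H0 HS. induction n; simpl; auto. Qed.

Lemma pw_prop (P : (R -> R) -> Prop) k : P (fun x => x) -> (forall g, P g -> P (fun x => r (g x))) ->
  (forall g, P g -> P (fun x => ri (g x))) -> P (pw r ri k).
Proof. intros. unfold pw. destruct (0 <=? k)%Z; apply it_prop; auto. Qed.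

End PW.

Lemma incr_inv f fi : incr f -> inverse_of f fi -> incr fi.
Proof.
  intros H Hi x y Hxy. destruct (Rlt_or_le (fi x) (fi y)) as [|Hle]; auto.
  apply (incr_le f) in Hle; auto. destruct (Hi x), (Hi y). lra.
Qed.

Lemma pw_incr r ri k : incr r -> inverse_of r ri -> incr (pw r ri k).
Proof.
  intros H Hi. pose proof (incr_inv r ri H Hi).
  apply pw_prop; unfold incr; auto.
Qed.

Lemma pw_mv r ri k y : inverse_of r ri -> mv r y -> mv r (pw r ri k y).
Proof.
  intros Hi Hy. revert y Hy.
  apply (pw_prop r ri (fun g => forall y, mv r y -> mv r (g y))); auto.
  - intros g Hg y Hy. apply (mv_f r ri); auto.
  - intros g Hg y Hy. apply (mv_fi r ri); auto.
Qed.

Lemma pw_mono_exp r ri x j n : inverse_of r ri -> (forall y, y <= r y) ->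
  pw r ri j x <= pw r ri (j + Z.of_nat n) x.
Proof.
  intros Hi Hp. induction n.
  - replace (j + Z.of_nat 0)%Z with j by lia. lra.
  - replace (j + Z.of_nat (S n))%Z with (Z.succ (j + Z.of_nat n)) by lia.
    rewrite (pw_succ r ri Hi). pose proof (Hp (pw r ri (j + Z.of_nat n) x)). lra.
Qed.

Lemma pw_mono_exp' r ri x j j' : inverse_of r ri -> (forall y, y <= r y) -> (j <= j')%Z ->
  pw r ri j x <= pw r ri j' x.
Proof.
  intros Hi Hp Hj. replace j' with (j + Z.of_nat (Z.to_nat (j' - j)))%Z by lia.
  apply pw_mono_exp; auto.
Qed.

Definition conjp (g gi : R -> R) (q : pr) : pr :=
  (fun x => g (fst q (gi x)), fun y => snd q (gi y)).

Lemma conj_mv g gi q x : inverse_of g gi -> (mv (fst (conjp g gi q)) x <-> mv (fst q) (gi x)).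
Proof.
  intros Hi. unfold conjp, mv; simpl. split; intros H E; apply H.
  - rewrite E. destruct (Hi x); auto.
  - rewrite <- E at 2. destruct (Hi (fst q (gi x))); auto.
Qed.

Lemma conj_nice g gi q : incr g -> inverse_of g gi -> nice q -> nice (conjp g gi q).
Proof.
  intros Hg Hi [Hinc [[fi Hfi] [Hpos [Hcv [x0 [Hx0 HI]]]]]].
  pose proof (incr_inv g gi Hg Hi) as Hgi.
  unfold nice. split; [|split; [|split; [|split]]].
  - intros x y Hxy. simpl. apply Hg, Hinc, Hgi, Hxy.
  - exists (fun x => g (fi (gi x))). intro x. simpl.
    destruct (Hi x), (Hi (fi (gi x))), (Hfi (gi x)), (Hi (fst q (gi x))), (Hfi (gi x)). split; congruence.
  - intro x. simpl. pose proof (incr_le g _ _ Hg (Hpos (gi x))). destruct (Hi x). lra.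
  - intros a b c Ha Hb Hc. apply conj_mv; auto. apply conj_mv in Ha; auto. apply conj_mv in Hb; auto.
    apply (Hcv (gi a) (gi b)); auto. split; apply incr_le; tauto.
  - exists (g x0). split.
    + apply conj_mv; auto. destruct (Hi x0) as [_ E]. rewrite E; auto.
    + intro y. simpl. destruct (Hi x0) as [_ E]. rewrite E. rewrite HI.
      rewrite <- (incr_le_iff g x0 (gi y) Hg), <- (incr_le_iff g (gi y) (fst q x0) Hg).
      destruct (Hi y) as [E2 _]. rewrite E2. tauto.
Qed.

Section Step.
Variable T : pr -> Prop.
Variable rho : pr -> nat.
Variable d : nat.
Hypothesis Hnice : forall p, T p -> nice p.
Hypothesis Hsys : forall p q, T p -> T q -> p <> q -> disj (fst p) (fst q) \/ below p q \/ below q p.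
Hypothesis Hrank : forall p q, T p -> T q -> p <> q -> below p q -> (rho p < rho q)%nat.
Hypothesis Hbound : forall p, T p -> (rho p < S d)%nat.

Definition root p := T p /\ forall q, T q -> q <> p -> ~ below p q.

Lemma root_above_n n : forall p, T p -> (S d - rho p <= n)%nat -> ~ root p -> exists r, root r /\ below p r.
Proof.
  induction n; intros p Hp Hn Hr.
  - pose proof (Hbound p Hp). lia.
  - assert (exists q, T q /\ q <> p /\ below p q) as [q [Hq [Hqp Hb]]].
    { apply NNPP; intro HH. apply Hr. split; auto. intros q Hq Hne Hb. apply HH; eauto. }
    pose proof (Hrank p q Hp Hq (not_eq_sym Hqp) Hb).
    destruct (classic (root q)) as [Hrq|Hrq]; [exists q; auto|].
    destruct (IHn q Hq) as [r [Hr1 Hr2]]; auto. lia.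
    exists r; split; auto. apply (below_trans p q r); auto.
Qed.

Lemma root_above p : T p -> ~ root p -> exists r, root r /\ below p r.
Proof. intros; eapply root_above_n; eauto. Qed.

Lemma roots_disj r1 r2 : root r1 -> root r2 -> r1 <> r2 -> disj (fst r1) (fst r2).
Proof.
  intros [H1 R1] [H2 R2] Hne. destruct (Hsys r1 r2 H1 H2 Hne) as [|[Hb|Hb]]; auto.
  - exfalso; apply (R1 r2); auto.
  - exfalso; apply (R2 r1); auto.
Qed.

Record W := mkW { wr : pr; wri : R -> R; wk : Z; wq : pr }.

Definition Tw (w : W) := root (wr w) /\ inverse_of (fst (wr w)) (wri w) /\ T (wq w) /\ below (wq w) (wr w).

Definition cp (w : W) : pr :=
  conjp (pw (fst (wr w)) (wri w) (wk w)) (pw (fst (wr w)) (wri w) (- wk w)) (wq w).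

Definition T' (p : pr) := exists w, Tw w /\ p = cp w.

Lemma Tw_nice w : Tw w -> nice (cp w).
Proof.
  intros [[Hr _] [Hi [Hq _]]]. apply conj_nice; auto.
  apply pw_incr; auto. apply Hnice; auto. apply pw_inv; auto.
Qed.

Lemma cp_mv w x : Tw w -> (mv (fst (cp w)) x <-> mv (fst (wq w)) (pw (fst (wr w)) (wri w) (- wk w) x)).
Proof. intros [_ [Hi _]]. apply conj_mv. apply pw_inv; auto. Qed.

Lemma cp_in_r w x : Tw w -> mv (fst (cp w)) x -> mv (fst (wr w)) x.
Proof.
  intros Hw Hx. apply cp_mv in Hx; auto. pose proof Hw as [[Hr _] [Hi [Hq Hb]]].
  apply Hb in Hx. apply I_mv in Hx; auto.
  apply (pw_mv _ (wri w) (wk w)) in Hx; auto. rewrite <- (pw_add _ _ Hi) in Hx.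
  replace (wk w + - wk w)%Z with 0%Z in Hx by lia. exact Hx.
Qed.

Lemma cp_loc w x x0 : Tw w -> (forall y, snd (wr w) y <-> x0 <= y <= fst (wr w) x0) ->
  mv (fst (cp w)) x ->
  pw (fst (wr w)) (wri w) (wk w) x0 < x < pw (fst (wr w)) (wri w) (wk w + 1) x0.
Proof.
  intros Hw HI Hx. apply cp_mv in Hx; auto. pose proof Hw as [[Hr _] [Hi [Hq Hb]]].
  pose proof (below_inner _ _ _ _ (Hnice _ Hq) HI Hb Hx) as [A B].
  pose proof (pw_incr _ _ (wk w) (proj1 (Hnice _ Hr)) Hi) as Hinc.
  apply Hinc in A; apply Hinc in B.
  destruct (pw_inv _ _ Hi (wk w) x) as [E _]. rewrite E in A, B.
  assert (E2 : pw (fst (wr w)) (wri w) (wk w) (fst (wr w) x0) = pw (fst (wr w)) (wri w) (wk w + 1) x0).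
  { rewrite (pw_add _ _ Hi). reflexivity. }
  rewrite E2 in B. split; assumption.
Qed.


Lemma nice_root r : root r -> nice r.
Proof. intros [H _]; auto. Qed.

Lemma rel_lemma w1 w2 : Tw w1 -> Tw w2 ->
  disj (fst (cp w1)) (fst (cp w2)) \/ (wr w1 = wr w2 /\ wri w1 = wri w2 /\ wk w1 = wk w2).
Proof.
  intros H1 H2. destruct (classic (wr w1 = wr w2)) as [E|Ne].
  - assert (Eri : wri w1 = wri w2).
    { destruct H1 as [_ [Hi1 _]]; destruct H2 as [_ [Hi2 _]]. rewrite E in Hi1. eapply inv_unique; eauto. }
    destruct (Z.eq_dec (wk w1) (wk w2)) as [Ek|Nk]; [right; auto|left].
    pose proof (nice_root _ (proj1 H1)) as [_ [_ [Hpos [_ [x0 [_ HI]]]]]].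
    assert (HI2 : forall y, snd (wr w2) y <-> x0 <= y <= fst (wr w2) x0) by (rewrite <- E; auto).
    intros x [Hx1 Hx2].
    pose proof (cp_loc w1 x x0 H1 HI Hx1) as [A1 B1].
    pose proof (cp_loc w2 x x0 H2 HI2 Hx2) as [A2 B2].
    rewrite <- E, <- Eri in A2, B2.
    pose proof (proj1 (proj2 H1)) as Hi.
    destruct (Z_lt_le_dec (wk w1) (wk w2)).
    + pose proof (pw_mono_exp' _ _ x0 (wk w1 + 1) (wk w2) Hi Hpos ltac:(lia)). lra.
    + pose proof (pw_mono_exp' _ _ x0 (wk w2 + 1) (wk w1) Hi Hpos ltac:(lia)). lra.
  - left. intros x [Hx1 Hx2]. apply (cp_in_r w1 x H1) in Hx1. apply (cp_in_r w2 x H2) in Hx2.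
    apply (roots_disj _ _ (proj1 H1) (proj1 H2) Ne x). auto.
Qed.

Lemma T'_nice p : T' p -> nice p.
Proof. intros [w [Hw ->]]. apply Tw_nice; auto. Qed.

Lemma T'_sys p q : T' p -> T' q -> p <> q -> disj (fst p) (fst q) \/ below p q \/ below q p.
Proof.
  intros [w1 [H1 ->]] [w2 [H2 ->]] Hne.
  destruct (rel_lemma w1 w2 H1 H2) as [|[Er [Eri Ek]]]; [left; auto|].
  destruct w1 as [r1 ri1 k1 q1], w2 as [r2 ri2 k2 q2]; simpl in *. subst.
  destruct (classic (q1 = q2)) as [Eq|Nq]; [subst; tauto|].
  destruct H1 as [_ [Hi [Hq1 _]]]; destruct H2 as [_ [_ [Hq2 _]]].
  unfold cp, conjp, below, disj in *; simpl in *.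
  destruct (Hsys q1 q2 Hq1 Hq2 Nq) as [Hd|[Hb|Hb]].
  - left. intros x [A B]. apply (Hd (pw (fst r2) ri2 (- k2) x)). split.
    + apply (conj_mv _ _ q1 x (pw_inv _ _ Hi k2)); auto.
    + apply (conj_mv _ _ q2 x (pw_inv _ _ Hi k2)); auto.
  - right; left. intros x A. apply Hb. apply (conj_mv _ _ q1 x (pw_inv _ _ Hi k2)); auto.
  - right; right. intros x A. apply Hb. apply (conj_mv _ _ q2 x (pw_inv _ _ Hi k2)); auto.
Qed.

Definition rho' (p : pr) : nat :=
  match excluded_middle_informative (T' p) with
  | left H => rho (wq (proj1_sig (constructive_indefinite_description _ H)))
  | right _ => 0%nat end.

Lemma rho'_spec p : T' p -> exists w, Tw w /\ p = cp w /\ rho' p = rho (wq w).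
Proof.
  intro H. unfold rho'. destruct (excluded_middle_informative (T' p)) as [t|]; [|contradiction].
  destruct (constructive_indefinite_description _ t) as [w [Hw E]]; simpl. exists w; auto.
Qed.

Lemma T'_rank p q : T' p -> T' q -> p <> q -> below p q -> (rho' p < rho' q)%nat.
Proof.
  intros Hp Hq Hne Hb.
  destruct (rho'_spec p Hp) as [w1 [H1 [E1 R1]]]. destruct (rho'_spec q Hq) as [w2 [H2 [E2 R2]]].
  rewrite R1, R2. subst p q.
  destruct (rel_lemma w1 w2 H1 H2) as [Hd|[Er [Eri Ek]]].
  { exfalso. apply (nice_disj_below (cp w1) (cp w2)); auto; apply Tw_nice; auto. }
  destruct w1 as [r1 ri1 k1 q1], w2 as [r2 ri2 k2 q2]; simpl in *. subst.
  destruct (classic (q1 = q2)) as [Eq|Nq]; [subst; tauto|].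
  pose proof H1 as [_ [Hi [Hq1 _]]]; destruct H2 as [_ [_ [Hq2 _]]]. simpl in Hi, Hq1, Hq2.
  apply Hrank; auto. intros y Hy.
  pose proof (Hb (pw (fst r2) ri2 k2 y)) as HH. unfold cp, conjp in HH; simpl in HH.
  destruct (pw_inv _ _ Hi (-k2) y) as [E _]. rewrite Z.opp_involutive in E. rewrite E in HH.
  apply HH. apply (conj_mv _ _ q1 _ (pw_inv _ _ Hi k2)). rewrite E. auto.
Qed.

Lemma T'_bound p : T' p -> (rho' p < d)%nat.
Proof.
  intros Hp. destruct (rho'_spec p Hp) as [w [[[Hr _] [Hi [Hq Hb]]] [_ R]]]. rewrite R.
  assert (wq w <> wr w) by (intro E; rewrite E in Hb; apply (below_irrefl (wr w)); auto).
  pose proof (Hrank _ _ Hq Hr H Hb). pose proof (Hbound _ Hr). lia.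
Qed.


Definition G := gen (fun f => exists I, T (f, I)).
Definition N := gen (fun f => exists I, T' (f, I)).

Lemma G_inv f : G f -> exists fi, inverse_of f fi.
Proof.
  apply gen_has_inv. intros h [I HT]. destruct (Hnice _ HT) as [_ [H _]]. exact H.
Qed.

Lemma N_inv f : N f -> exists fi, inverse_of f fi.
Proof.
  apply gen_has_inv. intros h [I HT]. destruct (T'_nice _ HT) as [_ [H _]]. exact H.
Qed.

Lemma inv_sym f fi : inverse_of f fi -> inverse_of fi f.
Proof. intros H x; destruct (H x); auto. Qed.

Lemma root_G r : root r -> G (fst r).
Proof. intros [H _]. apply gen_base. exists (snd r). destruct r; auto. Qed.

Lemma pw_G r ri k : root r -> inverse_of (fst r) ri -> G (pw (fst r) ri k).
Proof.
  intros Hr Hi. pose proof (root_G r Hr) as Gr. apply pw_prop.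
  - apply gen_id.
  - intros g Hg. apply (gen_comp _ (fst r) g); auto.
  - intros g Hg. apply (gen_comp _ ri g); auto. apply (gen_inv _ (fst r)); auto.
Qed.

Lemma N_G f : N f -> G f.
Proof.
  apply gen_sub. intros h [I [w [Hw E]]].
  assert (h = fst (cp w)) by (rewrite <- E; auto). subst h.
  pose proof Hw as [Hr [Hi [Hq _]]].
  unfold cp, conjp; simpl.
  apply (gen_comp _ (pw (fst (wr w)) (wri w) (wk w)) (fun x => fst (wq w) (pw (fst (wr w)) (wri w) (- wk w) x))).
  apply pw_G; auto.
  apply (gen_comp _ (fst (wq w)) (pw (fst (wr w)) (wri w) (- wk w))).
  apply gen_base. exists (snd (wq w)). destruct (wq w); auto.
  apply pw_G; auto.
Qed.

Lemma N_cp w : Tw w -> N (fst (cp w)).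
Proof. intros Hw. apply gen_base. exists (snd (cp w)). exists w. split; auto. Qed.

Lemma root_norm r ri : root r -> inverse_of (fst r) ri -> forall n, N n ->
  N (fun x => fst r (n (ri x))) /\ N (fun x => ri (n (fst r x))).
Proof.
  intros Hr Hi n Hn. induction Hn.
  - split; apply (gen_ext _ (fun x => x)); try apply gen_id; intro x; destruct (Hi x); auto.
  - destruct H as [I [w [Hw E]]].
    assert (Ef : f = fst (cp w)) by (rewrite <- E; auto). subst f.
    destruct (classic (wr w = r)) as [Er|Nr].
    + pose proof Hw as [Hr' [Hi' [Hq Hb]]].
      assert (Eri : wri w = ri) by (rewrite Er in Hi'; eapply inv_unique; eauto).
      destruct w as [r0 ri0 k q]; simpl in *; subst r0 ri0.
      split.
      * apply (gen_ext _ (fst (cp (mkW r ri (1 + k) q)))).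
        apply N_cp. split; auto.
        intro x. unfold cp, conjp; cbn [fst snd wr wri wk wq]. rewrite !(pw_add _ _ Hi). f_equal. f_equal.
        replace (- (1 + k))%Z with (- k + -1)%Z by lia. rewrite (pw_add _ _ Hi). reflexivity.
      * apply (gen_ext _ (fst (cp (mkW r ri (-1 + k) q)))).
        apply N_cp. split; auto.
        intro x. unfold cp, conjp; cbn [fst snd wr wri wk wq]. rewrite !(pw_add _ _ Hi). f_equal. f_equal.
        replace (- (-1 + k))%Z with (- k + 1)%Z by lia. rewrite (pw_add _ _ Hi). reflexivity.
    + assert (Hd : disj (fst r) (fst (cp w))).
      { intros x [A B]. apply (roots_disj r (wr w) Hr (proj1 Hw) (not_eq_sym Nr) x). split; auto.
        apply (cp_in_r w x Hw B). }
      destruct (Tw_nice w Hw) as [_ [[ci Hci] _]].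
      pose proof (commute _ _ _ _ Hi Hci Hd) as Hc.
      split; apply (gen_ext _ (fst (cp w))); [apply N_cp; auto| |apply N_cp; auto|]; intro x.
      * rewrite Hc. destruct (Hi x) as [A _]. rewrite A; auto.
      * rewrite <- Hc. destruct (Hi (fst (cp w) x)) as [_ A]. rewrite A; auto.
  - destruct IHHn1 as [A1 B1], IHHn2 as [A2 B2]. split.
    + apply (gen_ext _ (fun x => (fun y => fst r (f (ri y))) ((fun y => fst r (g (ri y))) x))).
      apply (gen_comp _ (fun y => fst r (f (ri y))) (fun y => fst r (g (ri y)))); auto. intro x. destruct (Hi (g (ri x))) as [_ E]. rewrite E; auto.
    + apply (gen_ext _ (fun x => (fun y => ri (f (fst r y))) ((fun y => ri (g (fst r y))) x))).
      apply (gen_comp _ (fun y => ri (f (fst r y))) (fun y => ri (g (fst r y)))); auto. intro x. destruct (Hi (g (fst r x))) as [E _]. rewrite E; auto.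
  - destruct IHHn as [A B]. split.
    + apply (gen_inv _ (fun x => fst r (f (ri x)))); auto. intro x.
      destruct (H (ri x)) as [E1 E2]. destruct (Hi (g (ri x))) as [_ E3]. destruct (Hi (f (ri x))) as [_ E4].
      destruct (Hi x) as [E5 _]. rewrite E3, E4, E1, E2, E5. auto.
    + apply (gen_inv _ (fun x => ri (f (fst r x)))); auto. intro x.
      destruct (H (fst r x)) as [E1 E2]. destruct (Hi (g (fst r x))) as [E3 _]. destruct (Hi (f (fst r x))) as [E4 _].
      destruct (Hi x) as [_ E5]. rewrite E3, E4, E1, E2, E5. auto.
Qed.


Lemma nonroot_N f I : T (f, I) -> ~ root (f, I) -> N f.
Proof.
  intros HT Hnr. destruct (root_above _ HT Hnr) as [r [Hr Hb]].
  destruct (nice_root r Hr) as [_ [[ri Hi] _]].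
  apply (gen_ext _ (fst (cp (mkW r ri 0 (f, I))))).
  - apply N_cp. split; auto.
  - intro x. reflexivity.
Qed.

Lemma N_inv_in f fi : N f -> inverse_of f fi -> N fi.
Proof. intros; eapply gen_inv; eauto. Qed.

Lemma G_norm g : G g -> forall gi, inverse_of g gi -> forall n, N n ->
  N (fun x => g (n (gi x))) /\ N (fun x => gi (n (g x))).
Proof.
  intro Hg. induction Hg; intros gi Hgi n Hn.
  - assert (gi = fun x => x) by (eapply inv_unique; eauto; intro; auto). subst gi.
    split; apply (gen_ext _ n); auto.
  - destruct H as [I HT]. destruct (classic (root (f, I))) as [Hr|Hr].
    + apply (root_norm (f, I) gi Hr Hgi n Hn).
    + pose proof (nonroot_N f I HT Hr) as Nf.
      pose proof (N_inv_in f gi Nf Hgi) as Ngi.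
      split.
      * apply (gen_comp _ f (fun x => n (gi x))); auto. apply (gen_comp _ n gi); auto.
      * apply (gen_comp _ gi (fun x => n (f x))); auto. apply (gen_comp _ n f); auto.
  - destruct (G_inv f Hg1) as [fi Hfi]. destruct (G_inv g Hg2) as [gi' Hgi'].
    assert (gi = fun x => gi' (fi x)).
    { eapply inv_unique; eauto. intro x. destruct (Hfi x), (Hgi' (fi x)), (Hgi' x), (Hfi (g x)). split; congruence. }
    subst gi. split.
    + destruct (IHHg2 gi' Hgi' n Hn) as [A _].
      destruct (IHHg1 fi Hfi _ A) as [B _]. exact B.
    + destruct (IHHg1 fi Hfi n Hn) as [_ A].
      destruct (IHHg2 gi' Hgi' _ A) as [_ B]. exact B.
  - assert (gi = f) by (eapply inv_unique; eauto; apply inv_sym; auto). subst gi.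
    destruct (IHHg g H n Hn) as [A B]. split; auto.
Qed.

Definition C f g := exists n, N n /\ forall x, f (g x) = n (g (f x)).

Lemma C_N_l f g : N f -> G g -> C f g.
Proof.
  intros Nf Gg. destruct (N_inv f Nf) as [fi Hfi]. destruct (G_inv g Gg) as [gi Hgi].
  exists (fun x => f (g (fi (gi x)))). split.
  - apply (gen_comp _ f (fun x => g (fi (gi x)))); auto.
    apply (G_norm g Gg gi Hgi fi). eapply N_inv_in; eauto.
  - intro x. destruct (Hgi (f x)) as [_ A]. rewrite A. destruct (Hfi x) as [_ B]. rewrite B. auto.
Qed.

Lemma C_sym f g : C f g -> C g f.
Proof.
  intros [n [Nn Hn]]. destruct (N_inv n Nn) as [ni Hni]. exists ni. split.
  - eapply N_inv_in; eauto.
  - intro x. rewrite Hn. destruct (Hni (g (f x))); auto.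
Qed.

Lemma C_comp f1 f2 g : G f1 -> C f1 g -> C f2 g -> C (fun x => f1 (f2 x)) g.
Proof.
  intros G1 [n1 [N1 H1]] [n2 [N2 H2]]. destruct (G_inv f1 G1) as [f1i Hf1i].
  exists (fun y => f1 (n2 (f1i (n1 y)))). split.
  - apply (gen_comp _ (fun y => f1 (n2 (f1i y))) n1); auto. apply (G_norm f1 G1 f1i Hf1i n2 N2).
  - intro x. rewrite H2. rewrite <- (H1 (f2 x)). destruct (Hf1i (g (f2 x))) as [_ A]. rewrite A. auto.
Qed.

Lemma C_inv f fi g : G f -> inverse_of f fi -> C f g -> C fi g.
Proof.
  intros Gf Hfi [n [Nn Hn]]. destruct (N_inv n Nn) as [ni Hni].
  exists (fun y => fi (ni (f y))). split.
  - apply (G_norm f Gf fi Hfi ni). eapply N_inv_in; eauto.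
  - intro x. rewrite Hn. destruct (Hfi x) as [A _]. rewrite A. destruct (Hni (g x)) as [_ B]. rewrite B. auto.
Qed.

Lemma C_all f g : G f -> G g -> C f g.
Proof.
  intros Gf. revert g. induction Gf; intros g0 Gg.
  - exists (fun x => x). split. apply gen_id. auto.
  - destruct H as [I HT]. destruct (classic (root (f, I))) as [Hr|Hr].
    2: { apply C_N_l; auto. eapply nonroot_N; eauto. }
    induction Gg.
    + exists (fun x => x). split. apply gen_id. auto.
    + destruct H as [J HT']. destruct (classic (root (f0, J))) as [Hr'|Hr'].
      2: { apply C_sym, C_N_l. eapply nonroot_N; eauto. apply gen_base; eauto. }
      exists (fun x => x). split. apply gen_id.
      destruct (classic ((f, I) = (f0, J))) as [E|Ne].
      * inversion E; subst; auto.
      * pose proof (roots_disj _ _ Hr Hr' Ne) as Hd.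
        destruct (nice_root _ Hr) as [_ [[fi Hfi] _]]. destruct (nice_root _ Hr') as [_ [[gi Hgi] _]].
        intro x. apply (commute _ _ _ _ Hfi Hgi Hd).
    + apply C_sym. apply C_comp; auto; apply C_sym; auto.
    + apply C_sym. apply (C_inv f0); auto. apply C_sym; auto.
  - apply C_comp; auto.
  - apply (C_inv f); auto.
Qed.

Lemma G1_N f : derived G 1 f -> N f.
Proof.
  simpl. apply gen_sub. intros h [a [b [ai [bi [Ga [Gb [Hai [Hbi E]]]]]]]]. subst h.
  destruct (C_all a b Ga Gb) as [n [Nn Hn]].
  assert (Gba : G (fun x => b (a x))) by (apply gen_comp; auto).
  assert (Hinv : inverse_of (fun x => b (a x)) (fun x => ai (bi x))).
  { intro x. destruct (Hai x), (Hbi x), (Hai (bi x)), (Hbi (a x)). split; congruence. }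
  destruct (G_norm _ Gba _ Hinv n Nn) as [_ A].
  apply (gen_ext _ _ _ A). intro x. simpl. rewrite Hn. auto.
Qed.

End Step.

Lemma gen_empty (A : (R -> R) -> Prop) h : (forall f, ~ A f) -> gen A h -> h = (fun x => x).
Proof.
  intros HA Hg. induction Hg.
  - reflexivity.
  - exfalso; eapply HA; eauto.
  - subst; reflexivity.
  - subst. apply functional_extensionality. intro x. destruct (H x) as [E _]. auto.
Qed.

Theorem main d : forall (T : pr -> Prop) (rho : pr -> nat),
  (forall p, T p -> nice p) ->
  (forall p q, T p -> T q -> p <> q -> disj (fst p) (fst q) \/ below p q \/ below q p) ->
  (forall p q, T p -> T q -> p <> q -> below p q -> (rho p < rho q)%nat) ->
  (forall p, T p -> (rho p < d)%nat) ->
  trivial_group (derived (gen (fun f => exists I, T (f, I))) d).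
Proof.
  induction d; intros T rho Hn Hs Hr Hb.
  - intros h Hh. simpl in Hh. apply (gen_empty (fun f => exists I, T (f, I)) h); auto.
    intros f [I HT]. pose proof (Hb _ HT). lia.
  - intros h Hh. rewrite derived_shift in Hh.
    apply (derived_mono _ (N T) d (G1_N T rho d Hn Hs Hr Hb)) in Hh.
    apply (IHd (T' T) (rho' T rho)) in Hh; auto.
    + apply T'_nice; auto.
    + apply T'_sys; auto.
    + apply T'_rank; auto.
    + apply (T'_bound T rho d); auto.
Qed.

Definition dec (P : Prop) : bool := if excluded_middle_informative P then true else false.

Lemma dec_true P : dec P = true <-> P.
Proof. unfold dec; destruct excluded_middle_informative; split; auto; discriminate. Qed.

Lemma count_le (P Q : pr -> bool) (l : list pr) :
  (forall x, In x l -> P x = true -> Q x = true) -> (length (filter P l) <= length (filter Q l))%nat.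
Proof.
  induction l; simpl; intros H; auto.
  destruct (P a) eqn:Ea.
  - rewrite (H a (or_introl eq_refl) Ea). simpl. apply le_n_S, IHl. intros; auto.
  - destruct (Q a); simpl; [apply le_S|]; apply IHl; intros; auto.
Qed.

Lemma count_lt (P Q : pr -> bool) (l : list pr) y :
  (forall x, In x l -> P x = true -> Q x = true) -> In y l -> Q y = true -> P y = false ->
  (length (filter P l) < length (filter Q l))%nat.
Proof.
  induction l; simpl; intros H Hy HQ HP; [contradiction|].
  destruct Hy as [->|Hy].
  - rewrite HP, HQ. simpl. apply le_n_S, count_le. intros; auto.
  - destruct (P a) eqn:Ea.
    + rewrite (H a (or_introl eq_refl) Ea). simpl. apply le_n_S, IHl; auto.
    + pose proof (IHl (fun x Hx => H x (or_intror Hx)) Hy HQ HP).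
      destruct (Q a); simpl; lia.
Qed.

Theorem propositionp (S : list ((R -> R) * (R -> Prop))) :
  fundamental_system S ->
  solvable (elementary_group S) /\
  derived_length_le (elementary_group S) (length S).
Proof.
  intros [_ [Hel Hpair]].
  assert (Hnice : forall p, In p S -> nice p).
  { intros [f I] Hp. destruct (Hel _ Hp) as [A [B [C D]]]. apply nice_of; auto. }
  assert (Hmm : forall p, In p S -> forall y, mv (fst p) y -> moved (fst p) y).
  { intros p Hp y Hy. split; auto. destruct (Hel _ Hp) as [[Hout _] _].
    apply NNPP; intro HH. apply Hy, Hout, HH. }
  set (rho := fun p => length (filter (fun q => dec (below q p)) S)).
  assert (H : trivial_group (derived (gen (fun f => exists I, In (f, I) S)) (length S))).
  { apply (main _ (fun p => In p S) rho); auto.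
    - intros p q Hp Hq Hne. destruct (Hpair p q Hp Hq Hne) as [A|[A|A]].
      + left. intros x [X1 X2]. apply (A x). split; apply mv_interior; auto.
      + right; left. intros x Hx. apply A. intros eps Heps. exists x. split.
        apply Hmm; auto. rewrite Rminus_diag, Rabs_R0; auto.
      + right; right. intros x Hx. apply A. intros eps Heps. exists x. split.
        apply Hmm; auto. rewrite Rminus_diag, Rabs_R0; auto.
    - intros p q Hp Hq Hne Hb. unfold rho. apply (count_lt _ _ _ p).
      + intros x Hx Hd. rewrite dec_true in Hd. rewrite dec_true. apply (below_trans x p q); auto.
      + auto.
      + rewrite dec_true; auto.
      + destruct (dec (below p p)) eqn:E; auto. rewrite dec_true in E. exfalso; apply (below_irrefl p); auto.
    - intros p Hp. unfold rho.
      assert (Hl : forall l : list ((R -> R) * (R -> Prop)), length l = length (filter (fun _ => true) l)) by (induction l; simpl; auto).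
      rewrite (Hl S).
      apply (count_lt _ _ _ p); auto.
      destruct (dec (below p p)) eqn:E; auto. rewrite dec_true in E. exfalso; apply (below_irrefl p); auto. }
  split; [exists (length S)|]; exact H.
Qed.
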